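(* Let $p$ be a prime, let $\{a^1,\ldots,a^n\}\subseteq \mathbb{Z}^m$ be a $p$-adic generating set for a cone, and let $F$ be a nonempty face of $\operatorname{cone}\{a^1,\ldots,a^n\}$. Then $\{a^i:a^i\in F\}$ is a $p$-adic generating set for the cone $F$.
   Context: A $p$-adic rational is a number $a/p^k$ with $a,k\in\mathbb{Z}$, $k\ge0$. A finite set $S\subseteq\mathbb{Z}^m$ is a $p$-adic generating set for a cone if every integral vector in the conic hull of $S$ is a conic combination of the elements of $S$ with $p$-adic coefficients. *)

(* Defs.v *)
From HB Require Import structures.
From mathcomp Require Import all_boot all_order all_algebra.
From mathcomp Require Import reals.
Set Implicit Arguments. Unset Strict Implicit. Unset Printing Implicit Defensive.
Import Order.TTheory GRing.Theory Num.Theory.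
Local Open Scope ring_scope.

Definition rembed (R : realType) (m : nat) (v : 'rV[int]_m) : 'rV[R]_m :=
  map_mx (fun z : int => z%:~R) v.

Definition padic_rat (R : realType) (p : nat) (r : R) : Prop :=
  exists (a : int) (k : nat), r = a%:~R / (p%:R ^+ k).

Definition conic_comb (R : realType) (m n : nat) (a : 'I_n -> 'rV[int]_m)
  (P : 'I_n -> Prop) (Q : R -> Prop) (x : 'rV[R]_m) : Prop :=
  exists lambda : 'I_n -> R,
    [/\ forall i, 0 <= lambda i,
        forall i, Q (lambda i),
        forall i, ~ P i -> lambda i = 0
      & x = \sum_(i < n) lambda i *: rembed R (a i)].

Definition in_cone (R : realType) (m n : nat) (a : 'I_n -> 'rV[int]_m)
  (P : 'I_n -> Prop) (x : 'rV[R]_m) : Prop :=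
  conic_comb a P (fun _ => True) x.

Definition padic_generating (R : realType) (p m n : nat)
  (a : 'I_n -> 'rV[int]_m) (P : 'I_n -> Prop) : Prop :=
  forall x : 'rV[int]_m, in_cone a P (rembed R x) ->
    conic_comb a P (padic_rat p) (rembed R x).

Definition dotv (R : realType) (m : nat) (c x : 'rV[R]_m) : R :=
  \sum_(j < m) c 0 j * x 0 j.

Definition is_face (R : realType) (m : nat) (C F : 'rV[R]_m -> Prop) : Prop :=
  exists (c : 'rV[R]_m) (d : R),
    (forall x, C x -> dotv c x <= d) /\
    (forall x, F x <-> (C x /\ dotv c x = d)).

(* Main.v *)
Require Import Defs.
From HB Require Import structures.
From mathcomp Require Import all_boot all_order all_algebra.
From mathcomp Require Import reals.
Import Order.TTheory GRing.Theory Num.Theory.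
Local Open Scope ring_scope.

Lemma dotv_sum (R : realType) (m n : nat) (c : 'rV[R]_m) (l : 'I_n -> R)
  (v : 'I_n -> 'rV[R]_m) :
  dotv c (\sum_(i < n) l i *: v i) = \sum_(i < n) l i * dotv c (v i).
Proof.
rewrite /dotv.
under eq_bigr => j _ do rewrite summxE mulr_sumr.
rewrite exchange_big /=; apply: eq_bigr => i _.
rewrite mulr_sumr; apply: eq_bigr => j _.
by rewrite mxE mulrCA.
Qed.

Lemma key (R : realType) (m n : nat) (c : 'rV[R]_m) (l : 'I_n -> R)
  (v : 'I_n -> 'rV[R]_m) :
  (forall i, 0 <= l i) -> (forall i, dotv c (v i) <= 0) ->
  dotv c (\sum_(i < n) l i *: v i) = 0 ->
  forall i, dotv c (v i) != 0 -> l i = 0.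
Proof.
move=> l0 v0; rewrite dotv_sum => hs i hi.
have h : forall i, - (l i * dotv c (v i)) = 0.
  move=> k; apply: (@psumr_eq0P _ _ predT
     (fun j => - (l j * dotv c (v j)))) => //.
    by move=> j _; rewrite oppr_ge0 mulr_ge0_le0.
  by rewrite sumrN hs oppr0.
by move/eqP: (h i); rewrite oppr_eq0 mulf_eq0 (negbTE hi) orbF => /eqP.
Qed.

Theorem proposition3p5 (R : realType) (p m n : nat) (a : 'I_n -> 'rV[int]_m)
  (F : 'rV[R]_m -> Prop) :
  prime p ->
  padic_generating R p a (fun _ => True) ->
  is_face (in_cone a (fun _ => True)) F ->
  (exists x, F x) ->
  (forall x, F x <-> in_cone a (fun i => F (rembed R (a i))) x) /\
  padic_generating R p a (fun i => F (rembed R (a i))).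
Proof.
move=> _ hgen [c [d [hval hF]]] [x0 Fx0].
have [[l0 [l0p _ _ ex0]] cx0] := (hF x0).1 Fx0.
have d0 : d = 0.
  apply/eqP; rewrite eq_le; apply/andP; split.
    have : in_cone a (fun _ => True) (2%:R *: x0).
      exists (fun i => 2%:R * l0 i); split => //.
        by move=> i; rewrite mulr_ge0.
      by rewrite ex0 scaler_sumr; apply: eq_bigr => i _; rewrite scalerA.
    move/hval; rewrite -cx0 /dotv.
    under eq_bigr => j _ do rewrite mxE mulrCA.
    rewrite -mulr_sumr -/(dotv c x0) cx0 => h.
    by rewrite -(lerD2l d) addr0 -mulr2n -mulr_natl.
  have : in_cone a (fun _ => True) (0 : 'rV[R]_m).
    exists (fun _ => 0 : R); split => //.
    by rewrite big1 // => i _; rewrite scale0r.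
  move/hval; suff -> : dotv c (0 : 'rV[R]_m) = 0 by [].
  by rewrite /dotv big1 // => j _; rewrite mxE mulr0.
rewrite {}d0 in hval hF cx0.
have ai_in : forall i, in_cone a (fun _ => True) (rembed R (a i)).
  move=> i; exists (fun j => (j == i)%:R); split => //; last first.
  symmetry; rewrite (bigD1 i) //= eqxx scale1r big1 ?addr0 // => k /negbTE ->.
  by rewrite scale0r.
have cai : forall i, dotv c (rembed R (a i)) <= 0.
  move=> i; have := hval _ (ai_in i).
  by [].
have fwd : forall l, (forall i, 0 <= l i) ->
    dotv c (\sum_(i < n) l i *: rembed R (a i)) = 0 ->
    forall i, ~ F (rembed R (a i)) -> l i = 0.
  move=> l lp hs i nF; apply: (@key _ _ _ c l _ lp cai hs).
  apply/eqP => e; apply: nF; apply/hF; split => //.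
have bwd : forall l, (forall i, 0 <= l i) ->
    (forall i, ~ F (rembed R (a i)) -> l i = 0) ->
    F (\sum_(i < n) l i *: rembed R (a i)).
  move=> l lp lz; apply/hF; split.
    by exists l; split.
  rewrite dotv_sum big1 // => i _.
  have [e|ne] := eqVneq (dotv c (rembed R (a i))) 0; first by rewrite e mulr0.
  rewrite lz ?mul0r //.
  by move=> /hF [_ e]; move: ne; rewrite e eqxx.
have part1 : forall x, F x <-> in_cone a (fun i => F (rembed R (a i))) x.
  move=> x; split.
    move=> Fx; have [[l [lp _ _ ex]] cx] := (hF x).1 Fx.
    exists l; split => //; apply: fwd => //; by rewrite -ex.
  by move=> [l [lp _ lz ->]]; apply: bwd.
split => // x hx.
have Fx : F (rembed R x) by apply/part1.
have [_ cx] := (hF _).1 Fx.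
have [l [lp lq _ ex]] := hgen x ((hF _).1 Fx).1.
exists l; split => //; apply: fwd => //; by rewrite -ex.
Qed.
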